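(* Let $q>1$ and let $\rho$ be a positive $2\pi$-periodic $C^2$ function with $(\ln\rho)''(t)<\sqrt{q}/(1+\sqrt{q})$ for all $t$; let $y(\theta)=\rho(\theta)(\cos\theta,\sin\theta)^T$, and let $\phi$ be a continuous function on $\mathbb{S}^1$. With the notation in the context, suppose there is a sequence of positive numbers $k_n\to\infty$ such that for every $\eta\in\mathbb{S}^1$ and every integer $N\ge0$, $$\sum_{j,l=1}^2\big(f_\eta^{j,l}\big)^N\frac{\phi(\mathcal{T}_{j,l}\eta+\delta_{l,2}\pi)\,\Psi_\eta^{j,l}}{|\det D^2\psi_\eta^{j,l}|^{1/2}}\,e^{\mathrm{i}\pi\frac{(-1)^l(1-(-1)^j)}{4}+\mathrm{i}k_n\psi_\eta^{j,l}}\longrightarrow0\quad(n\to\infty).$$ Let $\eta\in\mathbb{S}^1$ satisfy $\rho'(\theta_\eta)\rho'(\theta_\eta+\pi)\neq0$ and let $\Lambda=\{(j,l)\in\{1,2\}^2:\phi(\mathcal{T}_{j,l}\eta+\delta_{l,2}\pi)\neq0\}$. Then $\#\Lambda\in\{0,2,4\}$. If $\#\Lambda=4$, then for $j=1,2$, $$f_\eta^{j,1}=f_\eta^{j,2}\quad\text{and}\quad\frac{|\phi(\mathcal{T}_{j,1}\eta)|\,|\Psi_\eta^{j,1}|}{|\det D^2\psi_\eta^{j,1}|^{1/2}}=\frac{|\phi(\mathcal{T}_{j,2}\eta+\pi)|\,|\Psi_\eta^{j,2}|}{|\det D^2\psi_\eta^{j,2}|^{1/2}}.$$ If $\#\Lambda=2$,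 then $\Lambda=\{(j_1,l_1),(j_2,l_2)\}$ is neither $\{(1,1),(2,2)\}$ nor $\{(2,1),(1,2)\}$, and $$f_\eta^{j_1,l_1}=f_\eta^{j_2,l_2}\quad\text{and}\quad\frac{|\phi(\mathcal{T}_{j_1,l_1}\eta+\delta_{l_1,2}\pi)|\,|\Psi_\eta^{j_1,l_1}|}{|\det D^2\psi_\eta^{j_1,l_1}|^{1/2}}=\frac{|\phi(\mathcal{T}_{j_2,l_2}\eta+\delta_{l_2,2}\pi)|\,|\Psi_\eta^{j_2,l_2}|}{|\det D^2\psi_\eta^{j_2,l_2}|^{1/2}}.$$
   Context: Identify $\mathbb{S}^1$ with $\mathbb{R}/(2\pi\mathbb{Z})$ via $\theta\mapsto(\cos\theta,\sin\theta)^T$; $\theta_\eta$ is the angle of $\eta$, and $x^\perp=(-x_2,x_1)^T$. For $\eta\in\mathbb{S}^1$ and $\xi=(\cos\theta_\xi,\sin\theta_\xi)$: $\psi_\eta(\theta,\theta_\xi)=(\sqrt{q}\eta+\xi)\cdot y(\theta)$, $\Psi_\eta(\theta,\theta_\xi)=-(\sqrt{q}\eta-\xi)\cdot y'(\theta)^\perp$, and $D^2\psi_\eta(\theta,\theta_\xi)=\begin{bmatrix}(\sqrt{q}\eta+\xi)\cdot y''(\theta)&\xi^\perp\cdot y'(\theta)\\ \xi^\perp\cdot y'(\theta)&-\xi\cdot y(\theta)\end{bmatrix}$. For $l\in\{1,2\}$ let $\eta_l=(-1)^{l-1}\eta$, $\theta_q=\arccos(1/\sqrt q)$, $h(\theta)=\frac{\sqrt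 q\sin\theta}{\sqrt q\cos\theta+1}$; the equation $(\ln\rho)'(\theta)=h(\theta-\theta_{\eta_l})$ has exactly two solutions in $\mathbb{R}/(2\pi\mathbb{Z})$: $\mathcal{T}_{1,l}\eta$ with $\theta-\theta_{\eta_l}\in(\theta_q-\pi,\pi-\theta_q)$ and $\mathcal{T}_{2,l}\eta$ with $\theta-\theta_{\eta_l}\in(\pi-\theta_q,\pi+\theta_q)$ (mod $2\pi$). Set $\{\Psi_\eta^{j,l},\psi_\eta^{j,l},D^2\psi_\eta^{j,l}\}=\{\Psi_\eta,\psi_\eta,D^2\psi_\eta\}(\mathcal{T}_{j,l}\eta,\mathcal{T}_{j,l}\eta+\delta_{l,2}\pi)$ (these determinants are nonzero) and $f_\eta^{j,l}=\rho(\mathcal{T}_{j,l}\eta)\sin(\mathcal{T}_{j,l}\eta-\theta_\eta)$; $\delta_{l,2}$ is the Kronecker delta and $\phi$ is viewed as a function of the angle. *)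

(* Defs.v *)
From Stdlib Require Import Reals Lra List ClassicalEpsilon.
From Coquelicot Require Import Coquelicot.
Import ListNotations.
Open Scope R_scope.

Definition dot (x z : R * R) : R := fst x * fst z + snd x * snd z.
Definition perp (x : R * R) : R * R := (- snd x, fst x).
Definition vadd (x z : R * R) : R * R := (fst x + fst z, snd x + snd z).
Definition vsub (x z : R * R) : R * R := (fst x - fst z, snd x - snd z).
Definition vscal (a : R) (x : R * R) : R * R := (a * fst x, a * snd x).
Definition unitv (t : R) : R * R := (cos t, sin t).

Definition yc (rho : R -> R) (th : R) : R * R := (rho th * cos th, rho th * sin th).
Definition yc' (rho : R -> R) (th : R) : R * R :=
  (Derive (fun x => rho x * cos x) th, Derive (fun x => rho x * sin x) th).
Definition yc'' (rho : R -> R) (th : R) : R * R :=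
  (Derive_n (fun x => rho x * cos x) 2 th, Derive_n (fun x => rho x * sin x) 2 th).

(* eta = unitv te, xi = unitv tx *)
Definition psi_eta (q : R) (rho : R -> R) (te th tx : R) : R :=
  dot (vadd (vscal (sqrt q) (unitv te)) (unitv tx)) (yc rho th).
Definition Psi_eta (q : R) (rho : R -> R) (te th tx : R) : R :=
  - dot (vsub (vscal (sqrt q) (unitv te)) (unitv tx)) (perp (yc' rho th)).
(* determinant of the Hessian D^2 psi_eta(th, tx) *)
Definition detD2psi (q : R) (rho : R -> R) (te th tx : R) : R :=
  let a := dot (vadd (vscal (sqrt q) (unitv te)) (unitv tx)) (yc'' rho th) in
  let b := dot (perp (unitv tx)) (yc' rho th) in
  let d := - dot (unitv tx) (yc rho th) in
  a * d - b * b.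

Definition hq (q th : R) : R := sqrt q * sin th / (sqrt q * cos th + 1).
Definition theta_q (q : R) : R := acos (1 / sqrt q).

(* angle of eta_l = (-1)^(l-1) eta *)
Definition theta_l (l : nat) (te : R) : R := te + INR (l - 1) * PI.

(* T_{j,l} eta (as an angle, for eta = unitv te): a solution of
   (ln rho)'(theta) = h(theta - theta_{eta_l}) with theta - theta_{eta_l}
   in (theta_q - pi, pi - theta_q) for j = 1 and in (pi - theta_q, pi + theta_q)
   for j = 2 (the representative is chosen in that open interval; the solution
   is unique modulo 2 pi). *)
Definition Tjl (q : R) (rho : R -> R) (j l : nat) (te : R) : R :=
  epsilon (inhabits 0) (fun th =>
    (if Nat.eqb j 1
     then theta_l l te + theta_q q - PI < th < theta_l l te + PI - theta_q q
     else theta_l l te + PI - theta_q q < th < theta_l l te + PI + theta_q q) /\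
    Derive (fun x => ln (rho x)) th = hq q (th - theta_l l te)).

Definition Sjl (q : R) (rho : R -> R) (j l : nat) (te : R) : R :=
  Tjl q rho j l te + (if Nat.eqb l 2 then PI else 0).

Definition PSI (q : R) (rho : R -> R) (j l : nat) (te : R) : R :=
  Psi_eta q rho te (Tjl q rho j l te) (Sjl q rho j l te).
Definition PSIsmall (q : R) (rho : R -> R) (j l : nat) (te : R) : R :=
  psi_eta q rho te (Tjl q rho j l te) (Sjl q rho j l te).
Definition DET (q : R) (rho : R -> R) (j l : nat) (te : R) : R :=
  detD2psi q rho te (Tjl q rho j l te) (Sjl q rho j l te).
Definition fjl (q : R) (rho : R -> R) (j l : nat) (te : R) : R :=
  rho (Tjl q rho j l te) * sin (Tjl q rho j l te - te).

Definition cis (x : R) : C := (cos x, sin x).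

Definition phase (j l : nat) : R := PI * ((-1) ^ l * (1 - (-1) ^ j)) / 4.

Definition summand (q : R) (rho : R -> R) (phi : R -> C) (j l N : nat) (k te : R) : C :=
  Cmult (Cmult (RtoC (fjl q rho j l te ^ N * PSI q rho j l te
                      / sqrt (Rabs (DET q rho j l te))))
               (phi (Sjl q rho j l te)))
        (cis (phase j l + k * PSIsmall q rho j l te)).

Definition full_sum (q : R) (rho : R -> R) (phi : R -> C) (N : nat) (k te : R) : C :=
  Cplus (Cplus (summand q rho phi 1 1 N k te) (summand q rho phi 1 2 N k te))
        (Cplus (summand q rho phi 2 1 N k te) (summand q rho phi 2 2 N k te)).

Definition ampl (q : R) (rho : R -> R) (phi : R -> C) (j l : nat) (te : R) : R :=
  Cmod (phi (Sjl q rho j l te)) * Rabs (PSI q rho j l te) / sqrt (Rabs (DET q rho j l te)).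

Definition in_Lambda (q : R) (rho : R -> R) (phi : R -> C) (j l : nat) (te : R) : Prop :=
  (j = 1%nat \/ j = 2%nat) /\ (l = 1%nat \/ l = 2%nat) /\ phi (Sjl q rho j l te) <> 0.

Definition propb (P : Prop) : bool :=
  if excluded_middle_informative P then true else false.

Definition card_Lambda (q : R) (rho : R -> R) (phi : R -> C) (te : R) : nat :=
  length (filter (fun p : nat * nat => propb (in_Lambda q rho phi (fst p) (snd p) te))
                 [(1,1); (1,2); (2,1); (2,2)]%nat).

(* Main.v *)
Require Import Defs.
From Stdlib Require Import Reals Lra Lia List ClassicalEpsilon.
From Coquelicot Require Import Coquelicot.
Import ListNotations.
Open Scope R_scope.

Definition good (q : R) (rho : R -> R) : Prop :=
  1 < q /\ (forall t, 0 < rho t) /\ (forall t, rho (t + 2*PI) = rho t) /\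
  (forall t, ex_derive rho t) /\ (forall t, ex_derive (Derive rho) t) /\
  (forall t, Derive_n (fun x => ln (rho x)) 2 t < sqrt q / (1 + sqrt q)).

Definition Fl (rho : R -> R) t := Derive rho t / rho t.
Definition Fd (rho : R -> R) t :=
  (Derive (Derive rho) t * rho t - Derive rho t ^ 2) / rho t ^ 2.

Lemma dln (rho : R -> R) (Hpos : forall t, 0 < rho t) (Hd1 : forall t, ex_derive rho t) t :
  is_derive (fun x => ln (rho x)) t (Fl rho t).
Proof.
  unfold Fl. auto_derive.
  - split; [apply Hd1| split; [apply Hpos|exact I]].
  - unfold Rdiv. rewrite Rmult_1_l. reflexivity.
Qed.

Lemma dFl (rho : R -> R) (Hpos : forall t, 0 < rho t) (Hd1 : forall t, ex_derive rho t)
 (Hd2 : forall t, ex_derive (Derive rho) t) t : is_derive (Fl rho) t (Fd rho t).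
Proof.
  unfold Fl, Fd. auto_derive.
  - repeat split; try apply Hd1; try apply Hd2. apply Rgt_not_eq, Hpos.
  - change (fun x : R => Derive rho x) with (Derive rho). change (fun x : R => rho x) with rho.
    field. apply Rgt_not_eq, Hpos.
Qed.

Lemma Fd_lt q rho : good q rho -> forall t, Fd rho t < sqrt q / (1 + sqrt q).
Proof.
  intros (Hq & Hpos & Hper & Hd1 & Hd2 & Hl) t.
  rewrite <- (is_derive_unique _ _ _ (dFl rho Hpos Hd1 Hd2 t)).
  replace (Derive (Fl rho) t) with (Derive_n (fun x => ln (rho x)) 2 t). apply Hl.
  simpl. apply Derive_ext. intro x. apply is_derive_unique, dln; auto.
Qed.

Lemma Derive_ln q rho : good q rho -> forall t, Derive (fun x => ln (rho x)) t = Fl rho t.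
Proof.
  intros (Hq & Hpos & Hper & Hd1 & Hd2 & Hl) t. apply is_derive_unique, dln; auto.
Qed.

Lemma Derive_per q rho : good q rho -> forall t, Derive rho (t + 2*PI) = Derive rho t.
Proof.
  intros (Hq & Hpos & Hper & Hd1 & Hd2 & Hl) t.
  assert (H : is_derive (fun x => rho (x + 2*PI)) t (Derive rho (t + 2*PI))).
  { auto_derive. apply Hd1. change (fun x : R => rho x) with rho. ring. }
  rewrite <- (is_derive_unique _ _ _ H). apply Derive_ext. intro; apply Hper.
Qed.

Lemma Fl_per q rho : good q rho -> forall t, Fl rho (t + 2*PI) = Fl rho t.
Proof.
  intros HG t. unfold Fl. rewrite (Derive_per q rho HG).
  destruct HG as (Hq & Hpos & Hper & _). rewrite Hper. reflexivity.
Qed.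

Lemma mvt_pos (f f' : R -> R) a b : a < b ->
  (forall x, a <= x <= b -> is_derive f x (f' x)) -> (forall x, a <= x <= b -> 0 < f' x) ->
  f a < f b.
Proof.
  intros Hab Hd Hp.
  destruct (MVT_cor2 f f' a b Hab) as (c & Hc & Hc2).
  { intros c Hc. apply is_derive_Reals, Hd; auto. }
  assert (0 < f' c) by (apply Hp; lra).
  assert (0 < f' c * (b - a)) by (apply Rmult_lt_0_compat; lra). lra.
Qed.

Lemma mvt_nonpos (f f' : R -> R) a b : a <= b ->
  (forall x, a <= x <= b -> is_derive f x (f' x)) -> (forall x, a <= x <= b -> f' x <= 0) ->
  f b <= f a.
Proof.
  intros Hab Hd Hp. destruct (Req_dec a b) as [->|Hne]; [lra|].
  destruct (MVT_cor2 f f' a b) as (c & Hc & Hc2); [lra| |].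
  { intros c Hc. apply is_derive_Reals, Hd; auto. }
  assert (f' c <= 0) by (apply Hp; lra).
  assert (f' c * (b - a) <= 0).
  { apply Rmult_le_0_r; lra. } lra.
Qed.

Lemma s_gt1 q : 1 < q -> 1 < sqrt q.
Proof. intro. rewrite <- sqrt_1. apply sqrt_lt_1_alt. lra. Qed.

Lemma s_sq q : 1 < q -> sqrt q * sqrt q = q.
Proof. intro. apply sqrt_sqrt. lra. Qed.

Lemma thq_cos q : 1 < q -> cos (theta_q q) = 1 / sqrt q.
Proof.
  intro Hq. pose proof (s_gt1 q Hq). unfold theta_q. apply cos_acos.
  assert (0 < 1 / sqrt q) by (apply Rdiv_lt_0_compat; lra).
  assert (1 / sqrt q < 1).
  { apply (Rmult_lt_reg_r (sqrt q)); [lra|]. field_simplify; lra. }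
  lra.
Qed.

Lemma thq_range q : 1 < q -> 0 < theta_q q < PI / 2.
Proof.
  intro Hq. pose proof (s_gt1 q Hq). pose proof (thq_cos q Hq).
  assert (Hs0 : 0 < 1 / sqrt q) by (apply Rdiv_lt_0_compat; lra).
  assert (Hs1 : 1 / sqrt q < 1).
  { apply (Rmult_lt_reg_r (sqrt q)); [lra|]. field_simplify; lra. }
  pose proof (acos_bound (1 / sqrt q)) as HB. fold (theta_q q) in HB.
  pose proof PI_RGT_0.
  split.
  - destruct (Req_dec (theta_q q) 0) as [E|E]; [rewrite E, cos_0 in H0|]; lra.
  - destruct (Rlt_le_dec (theta_q q) (PI/2)) as [|Hle]; auto.
    assert (cos (theta_q q) <= 0). { apply cos_le_0; lra. } lra.
Qed.

Lemma cos_gt_abs a x : 0 <= a <= PI -> -a < x < a -> cos a < cos x.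
Proof.
  intros Ha Hx. destruct (Rle_dec 0 x).
  - apply cos_decreasing_1; lra.
  - rewrite <- (cos_neg x). apply cos_decreasing_1; lra.
Qed.

Lemma range1 q x : 1 < q -> theta_q q - PI < x < PI - theta_q q -> 0 < sqrt q * cos x + 1.
Proof.
  intros Hq Hx. pose proof (thq_range q Hq). pose proof (s_gt1 q Hq).
  assert (cos (PI - theta_q q) < cos x) by (apply cos_gt_abs; lra).
  rewrite Rtrigo_facts.cos_pi_minus, thq_cos in H1 by auto.
  apply (Rmult_lt_compat_l (sqrt q)) in H1; [|lra].
  replace (sqrt q * - (1 / sqrt q)) with (-1) in H1 by (field; lra). lra.
Qed.

Lemma range2 q x : 1 < q -> - theta_q q < x < theta_q q -> 0 < sqrt q * cos x - 1.
Proof.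
  intros Hq Hx. pose proof (thq_range q Hq). pose proof (s_gt1 q Hq).
  assert (cos (theta_q q) < cos x) by (apply cos_gt_abs; lra).
  rewrite thq_cos in H1 by auto.
  apply (Rmult_lt_compat_l (sqrt q)) in H1; [|lra].
  replace (sqrt q * (1 / sqrt q)) with 1 in H1 by (field; lra). lra.
Qed.

Definition hdv q x := sqrt q * (sqrt q + cos x) / (sqrt q * cos x + 1) ^ 2.

Lemma dh q x : sqrt q * cos x + 1 <> 0 -> is_derive (hq q) x (hdv q x).
Proof.
  intro H. unfold hq, hdv. auto_derive. auto.
  assert (E : sin x ^ 2 + cos x ^ 2 = 1) by (rewrite <- (sin2_cos2 x); unfold Rsqr; ring).
  transitivity (sqrt q * (sqrt q * (sin x ^ 2 + cos x ^ 2) + cos x) / (sqrt q * cos x + 1) ^ 2).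
  - field; auto.
  - rewrite E, Rmult_1_r. reflexivity.
Qed.

Lemma dh_ge q x : 1 < q -> sqrt q * cos x + 1 <> 0 -> sqrt q / (1 + sqrt q) <= hdv q x.
Proof.
  intros Hq H. pose proof (s_gt1 q Hq) as Hs. unfold hdv. set (s := sqrt q) in *.
  set (c := cos x) in *. pose proof (COS_bound x) as Hc. fold c in Hc.
  assert (HD : 0 < (s * c + 1) ^ 2) by (apply pow2_gt_0; auto).
  assert (E : s * (s + c) / (s * c + 1) ^ 2 - s / (1 + s) =
     (s * ((1 - c) * (s*s*c + s*s + s - 1))) / ((1 + s) * (s * c + 1) ^ 2)).
  { field. split; auto. lra. }
  assert (0 <= (s * ((1 - c) * (s*s*c + s*s + s - 1))) / ((1 + s) * (s * c + 1) ^ 2)).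
  { apply Rmult_le_pos.
    - apply Rmult_le_pos; [lra|]. apply Rmult_le_pos; [lra|]. nra.
    - left. apply Rinv_0_lt_compat. apply Rmult_lt_0_compat; lra. }
  lra.
Qed.

Lemma dFl_shift q rho c x : good q rho -> is_derive (fun y => Fl rho (c + y)) x (Fd rho (c + x)).
Proof.
  intros HG. destruct HG as (Hq & Hpos & Hper & Hd1 & Hd2 & Hl).
  pose proof (dFl rho Hpos Hd1 Hd2 (c + x)) as H.
  apply (is_derive_ext (fun y => Fl rho (c + y))); [reflexivity|].
  replace (Fd rho (c + x)) with (1 * Fd rho (c + x)) by ring.
  apply (is_derive_comp (Fl rho) (fun y => c + y)); auto.
  auto_derive; auto; ring.
Qed.

Lemma dminus (f g : R -> R) x a b : is_derive f x a -> is_derive g x b ->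
  is_derive (fun y => f y - g y) x (a - b).
Proof. intros. apply (is_derive_minus f g x a b); auto. Qed.

Lemma hq0 q : hq q 0 = 0.
Proof. unfold hq. rewrite sin_0. unfold Rdiv. ring. Qed.

Lemma hq_pi q x : sqrt q * cos x - 1 <> 0 -> hq q (x + PI) = sqrt q * sin x / (sqrt q * cos x - 1).
Proof.
  intro H. unfold hq. rewrite neg_sin, neg_cos.
  replace (sqrt q * - cos x + 1) with (- (sqrt q * cos x - 1)) by ring. field. auto.
Qed.

Lemma D1_noninc q rho c a b : good q rho ->
  theta_q q - PI < a -> a <= b -> b < PI - theta_q q ->
  Fl rho (c + b) - hq q b <= Fl rho (c + a) - hq q a.
Proof.
  intros HG Ha Hab Hb. pose proof HG as (Hq & _).
  apply (mvt_nonpos (fun x => Fl rho (c + x) - hq q x) (fun x => Fd rho (c + x) - hdv q x)); auto.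
  - intros x Hx. apply dminus. apply (dFl_shift q); auto.
    apply (dh q x). pose proof (range1 q x Hq). lra.
  - intros x Hx. pose proof (Fd_lt q rho HG (c + x)).
    assert (H1 := range1 q x Hq).
    assert (H2 := dh_ge q x Hq). assert (sqrt q * cos x + 1 <> 0) by (apply Rgt_not_eq, H1; lra).
    specialize (H2 H0). lra.
Qed.

Lemma D2_noninc q rho c a b : good q rho ->
  - theta_q q < a -> a <= b -> b < theta_q q ->
  Fl rho (c + b) - hq q (b + PI) <= Fl rho (c + a) - hq q (a + PI).
Proof.
  intros HG Ha Hab Hb. pose proof HG as (Hq & _).
  apply (mvt_nonpos (fun x => Fl rho (c + x) - hq q (x + PI)) (fun x => Fd rho (c + x) - hdv q (x + PI))); auto.
  - intros x Hx. apply dminus. apply (dFl_shift q); auto.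
    assert (H1 := range2 q x Hq).
    assert (H0 : sqrt q * cos (x + PI) + 1 <> 0) by (rewrite neg_cos; apply Rlt_not_eq; lra).
    pose proof (dh q (x + PI) H0) as H3.
    replace (hdv q (x + PI)) with (1 * hdv q (x + PI)) by ring.
    apply (is_derive_comp (hq q) (fun y => y + PI)); auto.
    auto_derive; auto.
  - intros x Hx. pose proof (Fd_lt q rho HG (c + x)).
    assert (H1 := range2 q x Hq).
    assert (H0 : sqrt q * cos (x + PI) + 1 <> 0) by (rewrite neg_cos; apply Rlt_not_eq; lra).
    assert (H2 := dh_ge q (x + PI) Hq H0). lra.
Qed.

Lemma dG q rho c x : good q rho ->
  is_derive (fun y => rho (c + y) * sin y) x (rho (c + x) * (Fl rho (c + x) * sin x + cos x)).
Proof.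
  intros (Hq & Hpos & Hper & Hd1 & Hd2 & Hl).
  auto_derive. apply Hd1. unfold Fl. change (fun x : R => rho x) with rho. field.
  apply Rgt_not_eq, Hpos.
Qed.


Lemma hq_diff q x : 1 < q -> - theta_q q < x < theta_q q ->
  hq q (x + PI) - hq q x =
  2 * sqrt q * sin x / ((sqrt q * cos x - 1) * (sqrt q * cos x + 1)).
Proof.
  intros Hq Hx. assert (H1 := range2 q x Hq Hx). rewrite hq_pi by lra. unfold hq.
  field. split; lra.
Qed.

Lemma hq_sc q x : 1 < q -> 0 < sqrt q * cos x + 1 -> 0 < hq q x * sin x + cos x.
Proof.
  intros Hq H. pose proof (s_gt1 q Hq). pose proof (COS_bound x).
  assert (E : hq q x * sin x + cos x = (sqrt q * (sin x ^ 2 + cos x ^ 2) + cos x) / (sqrt q * cos x + 1)).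
  { unfold hq. field. lra. }
  assert (E2 : sin x ^ 2 + cos x ^ 2 = 1) by (rewrite <- (sin2_cos2 x); unfold Rsqr; ring).
  rewrite E, E2. apply Rdiv_lt_0_compat; lra.
Qed.

Lemma core q rho c x1 x2 : good q rho ->
  theta_q q - PI < x1 < PI - theta_q q -> Fl rho (c + x1) = hq q x1 ->
  - theta_q q < x2 < theta_q q -> Fl rho (c + x2) = hq q (x2 + PI) ->
  Fl rho c <> 0 ->
  (0 < Fl rho c /\ 0 < rho (c + x2) * sin x2 < rho (c + x1) * sin x1) \/
  (Fl rho c < 0 /\ rho (c + x1) * sin x1 < rho (c + x2) * sin x2 < 0).
Proof.
  intros HG Hx1 E1 Hx2 E2 HA. pose proof HG as (Hq & Hpos & _).
  pose proof (thq_range q Hq) as Hth. pose proof PI_RGT_0 as HPI.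
  assert (HA0 : Fl rho (c + 0) = Fl rho c) by (rewrite Rplus_0_r; reflexivity).
  assert (Hh0 := hq0 q).
  assert (HhP : hq q (0 + PI) = 0) by (unfold hq; rewrite Rplus_0_l, sin_PI; unfold Rdiv; ring).
  assert (Hs := s_gt1 q Hq).
  destruct (Rlt_le_dec 0 (Fl rho c)) as [Hp|Hn].
  - left. split; auto.
    assert (P1 : 0 < x1).
    { destruct (Rlt_le_dec 0 x1) as [|H]; auto.
      pose proof (D1_noninc q rho c x1 0 HG ltac:(lra) H ltac:(lra)). lra. }
    assert (P2 : 0 < x2).
    { destruct (Rlt_le_dec 0 x2) as [|H]; auto.
      pose proof (D2_noninc q rho c x2 0 HG ltac:(lra) H ltac:(lra)). lra. }
    assert (P3 : x2 < x1).
    { destruct (Rlt_le_dec x2 x1) as [|H]; auto.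
      pose proof (D1_noninc q rho c x1 x2 HG ltac:(lra) H ltac:(lra)).
      pose proof (hq_diff q x2 Hq Hx2).
      assert (0 < sin x2) by (apply sin_gt_0; lra).
      pose proof (range2 q x2 Hq Hx2).
      assert (0 < 2 * sqrt q * sin x2 / ((sqrt q * cos x2 - 1) * (sqrt q * cos x2 + 1))).
      { apply Rdiv_lt_0_compat. apply Rmult_lt_0_compat; lra. apply Rmult_lt_0_compat; lra. }
      lra. }
    split.
    + apply Rmult_lt_0_compat; auto. apply sin_gt_0; lra.
    + apply (mvt_pos (fun y => rho (c + y) * sin y)
          (fun x => rho (c + x) * (Fl rho (c + x) * sin x + cos x))); auto.
      * intros. apply (dG q); auto.
      * intros x Hx. apply Rmult_lt_0_compat; auto.
        pose proof (D1_noninc q rho c x x1 HG ltac:(lra) ltac:(lra) ltac:(lra)).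
        assert (0 < sin x) by (apply sin_gt_0; lra).
        assert (Hr := range1 q x Hq ltac:(lra)).
        pose proof (hq_sc q x Hq Hr).
        assert (0 <= (Fl rho (c + x) - hq q x) * sin x) by (apply Rmult_le_pos; lra).
        nra.
  - assert (Hn' : Fl rho c < 0) by (destruct Hn; auto; contradiction). clear Hn.
    right. split; auto.
    assert (P1 : x1 < 0).
    { destruct (Rlt_le_dec x1 0) as [|H]; auto.
      pose proof (D1_noninc q rho c 0 x1 HG ltac:(lra) H ltac:(lra)). lra. }
    assert (P2 : x2 < 0).
    { destruct (Rlt_le_dec x2 0) as [|H]; auto.
      pose proof (D2_noninc q rho c 0 x2 HG ltac:(lra) H ltac:(lra)). lra. }
    assert (P3 : x1 < x2).
    { destruct (Rlt_le_dec x1 x2) as [|H]; auto.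
      pose proof (D1_noninc q rho c x2 x1 HG ltac:(lra) H ltac:(lra)).
      pose proof (hq_diff q x2 Hq Hx2).
      assert (Hsn : 0 < sin (- x2)) by (apply sin_gt_0; lra). rewrite sin_neg in Hsn.
      pose proof (range2 q x2 Hq Hx2).
      assert (0 < 2 * sqrt q * (- sin x2) / ((sqrt q * cos x2 - 1) * (sqrt q * cos x2 + 1))).
      { apply Rdiv_lt_0_compat. apply Rmult_lt_0_compat; lra. apply Rmult_lt_0_compat; lra. }
      assert (2 * sqrt q * (- sin x2) / ((sqrt q * cos x2 - 1) * (sqrt q * cos x2 + 1)) =
              - (2 * sqrt q * sin x2 / ((sqrt q * cos x2 - 1) * (sqrt q * cos x2 + 1)))).
      { field. split; lra. }
      lra. }
    split.
    + apply (mvt_pos (fun y => rho (c + y) * sin y)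
          (fun x => rho (c + x) * (Fl rho (c + x) * sin x + cos x))); auto.
      * intros. apply (dG q); auto.
      * intros x Hx. apply Rmult_lt_0_compat; auto.
        pose proof (D1_noninc q rho c x1 x HG ltac:(lra) ltac:(lra) ltac:(lra)).
        assert (Hsn : 0 < sin (- x)) by (apply sin_gt_0; lra). rewrite sin_neg in Hsn.
        assert (Hr := range1 q x Hq ltac:(lra)).
        pose proof (hq_sc q x Hq Hr).
        assert (0 <= (hq q x - Fl rho (c + x)) * (- sin x)) by (apply Rmult_le_pos; lra).
        nra.
    + assert (Hsn : 0 < sin (- x2)) by (apply sin_gt_0; lra). rewrite sin_neg in Hsn.
      pose proof (Hpos (c + x2)). nra.
Qed.

Lemma Kpos q : 1 < q -> 0 < sqrt q / (1 + sqrt q).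
Proof. intro Hq. pose proof (s_gt1 q Hq). apply Rdiv_lt_0_compat; lra. Qed.

Lemma bound_up q rho c x : good q rho -> 0 <= x <= PI ->
  Fl rho (c + x) <= Fl rho c + sqrt q / (1 + sqrt q) * PI.
Proof.
  intros HG Hx. pose proof HG as (Hq & _). pose proof (Kpos q Hq).
  set (K := sqrt q / (1 + sqrt q)) in *.
  pose proof (mvt_nonpos (fun y => Fl rho (c + y) - K * y) (fun y => Fd rho (c + y) - K) 0 x
    ltac:(lra)) as H1.
  assert (Fl rho (c + x) - K * x <= Fl rho (c + 0) - K * 0).
  { apply H1.
    - intros y Hy. apply dminus. apply (dFl_shift q); auto.
      auto_derive; auto; ring.
    - intros y Hy. pose proof (Fd_lt q rho HG (c + y)). fold K in H0. lra. }
  rewrite Rplus_0_r in H0. assert (K * x <= K * PI) by (apply Rmult_le_compat_l; lra). lra.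
Qed.

Lemma bound_dn q rho c x : good q rho -> - PI <= x <= 0 ->
  Fl rho c - sqrt q / (1 + sqrt q) * PI <= Fl rho (c + x).
Proof.
  intros HG Hx. pose proof HG as (Hq & _). pose proof (Kpos q Hq).
  set (K := sqrt q / (1 + sqrt q)) in *.
  pose proof (mvt_nonpos (fun y => Fl rho (c + y) - K * y) (fun y => Fd rho (c + y) - K) x 0
    ltac:(lra)) as H1.
  assert (Fl rho (c + 0) - K * 0 <= Fl rho (c + x) - K * x).
  { apply H1.
    - intros y Hy. apply dminus. apply (dFl_shift q); auto.
      auto_derive; auto; ring.
    - intros y Hy. pose proof (Fd_lt q rho HG (c + y)). fold K in H0. lra. }
  rewrite Rplus_0_r in H0. assert (K * x >= K * (-PI)) by (apply Rle_ge, Rmult_le_compat_l; lra). lra.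
Qed.

Lemma hq_odd q u : hq q (- u) = - hq q u.
Proof. unfold hq. rewrite sin_neg, cos_neg. unfold Rdiv. ring. Qed.

Lemma hq_odd_pi q u : hq q (- u + PI) = - hq q (u + PI).
Proof. unfold hq. rewrite !neg_sin, !neg_cos, sin_neg, cos_neg. unfold Rdiv. ring. Qed.

Lemma big1 q M : 1 < q -> exists u, 0 < u < PI - theta_q q /\ M < hq q u.
Proof.
  intro Hq. pose proof (s_gt1 q Hq) as Hs. pose proof (thq_range q Hq) as Hth.
  pose proof PI_RGT_0.
  set (s := sqrt q) in *.
  assert (Hq2 : s * s = q) by apply (s_sq q Hq).
  assert (Hm0 : 0 < 1 - 1 / q).
  { assert (1 / q < 1). { apply (Rmult_lt_reg_r q); [lra|]. field_simplify; lra. } lra. }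
  set (m := sqrt (1 - 1 / q)).
  assert (Hm : 0 < m) by (apply sqrt_lt_R0; auto).
  assert (HA : 0 < Rabs M + 1) by (pose proof (Rabs_pos M); lra).
  set (d := Rmin (1 / s) (m / (Rabs M + 1)) / 2).
  assert (Hi : 0 < 1 / s) by (apply Rdiv_lt_0_compat; lra).
  assert (Hi1 : 1 / s < 1). { apply (Rmult_lt_reg_r s); [lra|]. field_simplify; lra. }
  assert (Hd0 : 0 < d).
  { assert (0 < m / (Rabs M + 1)) by (apply Rdiv_lt_0_compat; auto).
    unfold d. apply Rmin_case; lra. }
  assert (Hd1 : d <= 1 / s / 2) by (unfold d; pose proof (Rmin_l (1/s) (m / (Rabs M + 1))); lra).
  assert (Hd2 : d <= m / (Rabs M + 1) / 2) by (unfold d; pose proof (Rmin_r (1/s) (m / (Rabs M + 1))); lra).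
  set (y := - (1 / s) + d).
  assert (Hy : -1 < y < 1) by (unfold y; lra).
  exists (acos y).
  pose proof (acos_bound_lt y Hy) as Hb.
  pose proof (cos_acos y ltac:(lra)) as Hc.
  pose proof (sin_acos y ltac:(lra)) as Hsn.
  assert (Hy2 : y² <= 1 / q).
  { unfold Rsqr. rewrite <- Hq2. assert (y < 0) by (unfold y; lra).
    assert (- (1 / s) < y) by (unfold y; lra).
    replace (1 / (s * s)) with ((1/s) * (1/s)) by (field; lra). nra. }
  assert (Hsm : m <= sin (acos y)) by (rewrite Hsn; apply sqrt_le_1_alt; lra).
  split.
  - split; [lra|].
    destruct (Rlt_le_dec (acos y) (PI - theta_q q)) as [|H1]; auto.
    assert (H2 : cos (acos y) <= cos (PI - theta_q q)).
    { destruct (Req_dec (acos y) (PI - theta_q q)) as [E|E]; [rewrite E; lra|].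
      left. apply cos_decreasing_1; lra. }
    rewrite Rtrigo_facts.cos_pi_minus, thq_cos in H2 by auto. fold s in H2.
    assert (Hyd : y = - (1 / s) + d) by reflexivity. lra.
  - unfold hq. fold s. rewrite Hc.
    replace (s * y + 1) with (s * d) by (unfold y; field; lra).
    replace (s * sin (acos y) / (s * d)) with (sin (acos y) / d) by (field; lra).
    assert (m / d >= 2 * (Rabs M + 1)).
    { apply Rle_ge. apply (Rmult_le_reg_r d); auto.
      replace (m / d * d) with m by (field; lra).
      apply (Rmult_le_reg_r (/ (Rabs M + 1))). apply Rinv_0_lt_compat; lra.
      replace (2 * (Rabs M + 1) * d * / (Rabs M + 1)) with (2 * d) by (field; lra).
      unfold Rdiv in Hd2. lra. }
    assert (m / d <= sin (acos y) / d) by (apply Rmult_le_compat_r; [left; apply Rinv_0_lt_compat|]; lra).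
    pose proof (Rle_abs M). lra.
Qed.

Lemma big2 q M : 1 < q -> exists u, 0 < u < theta_q q /\ M < hq q (u + PI).
Proof.
  intro Hq. pose proof (s_gt1 q Hq) as Hs. pose proof (thq_range q Hq) as Hth.
  pose proof PI_RGT_0.
  set (s := sqrt q) in *.
  assert (Hi : 0 < 1 / s) by (apply Rdiv_lt_0_compat; lra).
  assert (Hi1 : 1 / s < 1). { apply (Rmult_lt_reg_r s); [lra|]. field_simplify; lra. }
  set (b := (1 + 1 / s) / 2).
  assert (Hb0 : 0 < b < 1) by (unfold b; lra).
  assert (Hm0 : 0 < 1 - b * b) by nra.
  set (m := sqrt (1 - b * b)).
  assert (Hm : 0 < m) by (apply sqrt_lt_R0; auto).
  assert (HA : 0 < Rabs M + 1) by (pose proof (Rabs_pos M); lra).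
  set (d := Rmin ((1 - 1 / s) / 2) (m / (Rabs M + 1)) / 2).
  assert (Hd0 : 0 < d).
  { assert (0 < m / (Rabs M + 1)) by (apply Rdiv_lt_0_compat; auto).
    unfold d. apply Rmin_case; lra. }
  assert (Hd1 : d <= (1 - 1 / s) / 2 / 2) by (unfold d; pose proof (Rmin_l ((1 - 1 / s) / 2) (m / (Rabs M + 1))); lra).
  assert (Hd2 : d <= m / (Rabs M + 1) / 2) by (unfold d; pose proof (Rmin_r ((1 - 1 / s) / 2) (m / (Rabs M + 1))); lra).
  set (y := 1 / s + d).
  assert (Hyd : y = 1 / s + d) by reflexivity.
  assert (Hyb : 0 < y <= b) by (unfold b; lra).
  assert (Hy : -1 < y < 1) by lra.
  exists (acos y).
  pose proof (acos_bound_lt y Hy) as Hb.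
  pose proof (cos_acos y ltac:(lra)) as Hc.
  pose proof (sin_acos y ltac:(lra)) as Hsn.
  assert (Hy2 : y² <= b * b) by (unfold Rsqr; nra).
  assert (Hsm : m <= sin (acos y)) by (rewrite Hsn; apply sqrt_le_1_alt; lra).
  split.
  - split; [lra|].
    destruct (Rlt_le_dec (acos y) (theta_q q)) as [|H1]; auto.
    assert (H2 : cos (acos y) <= cos (theta_q q)).
    { destruct (Req_dec (acos y) (theta_q q)) as [E|E]; [rewrite E; lra|].
      left. apply cos_decreasing_1; lra. }
    rewrite thq_cos in H2 by auto. fold s in H2. lra.
  - rewrite hq_pi; fold s; rewrite Hc.
    2: { replace (s * y - 1) with (s * d) by (rewrite Hyd; field; lra).
         apply Rgt_not_eq. apply Rmult_lt_0_compat; lra. }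
    replace (s * y - 1) with (s * d) by (rewrite Hyd; field; lra).
    replace (s * sin (acos y) / (s * d)) with (sin (acos y) / d) by (field; lra).
    assert (m / d >= 2 * (Rabs M + 1)).
    { apply Rle_ge. apply (Rmult_le_reg_r d); auto.
      replace (m / d * d) with m by (field; lra).
      apply (Rmult_le_reg_r (/ (Rabs M + 1))). apply Rinv_0_lt_compat; lra.
      replace (2 * (Rabs M + 1) * d * / (Rabs M + 1)) with (2 * d) by (field; lra).
      unfold Rdiv in Hd2. lra. }
    assert (m / d <= sin (acos y) / d) by (apply Rmult_le_compat_r; [left; apply Rinv_0_lt_compat|]; lra).
    pose proof (Rle_abs M). lra.
Qed.

Lemma deriv_cont (f : R -> R) x l : is_derive f x l -> continuity_pt f x.
Proof.
  intro H. apply continuity_pt_filterlim. apply (ex_derive_continuous f x). exists l; auto.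
Qed.

Lemma dh_pi q x : 1 < q -> - theta_q q < x < theta_q q ->
  is_derive (fun y => hq q (y + PI)) x (hdv q (x + PI)).
Proof.
  intros Hq Hx. assert (H1 := range2 q x Hq Hx).
  assert (H0 : sqrt q * cos (x + PI) + 1 <> 0) by (rewrite neg_cos; apply Rlt_not_eq; lra).
  pose proof (dh q (x + PI) H0) as H3.
  replace (hdv q (x + PI)) with (1 * hdv q (x + PI)) by ring.
  apply (is_derive_comp (hq q) (fun y => y + PI)); auto.
  auto_derive; auto.
Qed.

Lemma exist1 q rho c : good q rho ->
  exists x, theta_q q - PI < x < PI - theta_q q /\ Fl rho (c + x) = hq q x.
Proof.
  intros HG. pose proof HG as (Hq & _). pose proof (thq_range q Hq) as Hth.
  pose proof PI_RGT_0.
  destruct (big1 q (Fl rho c + sqrt q / (1 + sqrt q) * PI) Hq) as (u & Hu & Hhu).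
  destruct (big1 q (- (Fl rho c - sqrt q / (1 + sqrt q) * PI)) Hq) as (u' & Hu' & Hhu').
  pose proof (bound_up q rho c u HG ltac:(lra)).
  pose proof (bound_dn q rho c (- u') HG ltac:(lra)).
  rewrite <- (Ropp_involutive (hq q u')), <- hq_odd in Hhu'.
  destruct (Ranalysis5.IVT_interv (fun x => hq q x - Fl rho (c + x)) (- u') u) as (z & Hz & Hz2).
  - intros a Ha. eapply deriv_cont. apply dminus. apply (dh q a).
    assert (Hr1 := range1 q a Hq ltac:(lra)). lra.
    apply (dFl_shift q); auto.
  - lra.
  - lra.
  - lra.
  - exists z. split; [lra|]. simpl in Hz2. lra.
Qed.

Lemma exist2 q rho c : good q rho ->
  exists x, - theta_q q < x < theta_q q /\ Fl rho (c + x) = hq q (x + PI).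
Proof.
  intros HG. pose proof HG as (Hq & _). pose proof (thq_range q Hq) as Hth.
  pose proof PI_RGT_0.
  destruct (big2 q (Fl rho c + sqrt q / (1 + sqrt q) * PI) Hq) as (u & Hu & Hhu).
  destruct (big2 q (- (Fl rho c - sqrt q / (1 + sqrt q) * PI)) Hq) as (u' & Hu' & Hhu').
  pose proof (bound_up q rho c u HG ltac:(lra)).
  pose proof (bound_dn q rho c (- u') HG ltac:(lra)).
  rewrite <- (Ropp_involutive (hq q (u' + PI))), <- hq_odd_pi in Hhu'.
  destruct (Ranalysis5.IVT_interv (fun x => hq q (x + PI) - Fl rho (c + x)) (- u') u) as (z & Hz & Hz2).
  - intros a Ha. eapply deriv_cont. apply dminus. apply (dh_pi q a Hq). lra.
    apply (dFl_shift q); auto.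
  - lra.
  - lra.
  - lra.
  - exists z. split; [lra|]. simpl in Hz2. lra.
Qed.

Lemma sin_2pi x : sin (x + 2 * PI) = sin x.
Proof. rewrite sin_plus, sin_2PI, cos_2PI. ring. Qed.
Lemma cos_2pi x : cos (x + 2 * PI) = cos x.
Proof. rewrite cos_plus, sin_2PI, cos_2PI. ring. Qed.

Definition Tprop q rho j l te th : Prop :=
    (if Nat.eqb j 1
     then theta_l l te + theta_q q - PI < th < theta_l l te + PI - theta_q q
     else theta_l l te + PI - theta_q q < th < theta_l l te + PI + theta_q q) /\
    Derive (fun x => ln (rho x)) th = hq q (th - theta_l l te).

Lemma T_spec q rho j l te : good q rho -> (j = 1 \/ j = 2)%nat ->
  Tprop q rho j l te (Tjl q rho j l te).
Proof.
  intros HG Hj. unfold Tjl. apply epsilon_spec.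
  set (c := theta_l l te).
  destruct Hj as [-> | ->]; simpl.
  - destruct (exist1 q rho c HG) as (x & Hx & E).
    exists (c + x). split; [lra|]. rewrite (Derive_ln q rho HG). rewrite E. f_equal. ring.
  - destruct (exist2 q rho (c + PI) HG) as (x & Hx & E).
    exists (c + PI + x). split; [lra|]. rewrite (Derive_ln q rho HG). rewrite E. f_equal. ring.
Qed.

Lemma yc1 q rho t : good q rho -> Derive (fun x => rho x * cos x) t = Derive rho t * cos t - rho t * sin t.
Proof.
  intros (Hq & Hpos & Hper & Hd1 & Hd2 & Hl). apply is_derive_unique.
  auto_derive. apply Hd1. change (fun x : R => rho x) with rho. ring.
Qed.
Lemma ys1 q rho t : good q rho -> Derive (fun x => rho x * sin x) t = Derive rho t * sin t + rho t * cos t.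
Proof.
  intros (Hq & Hpos & Hper & Hd1 & Hd2 & Hl). apply is_derive_unique.
  auto_derive. apply Hd1. change (fun x : R => rho x) with rho. ring.
Qed.
Lemma yc2 q rho t : good q rho -> Derive_n (fun x => rho x * cos x) 2 t =
  Derive (Derive rho) t * cos t - 2 * Derive rho t * sin t - rho t * cos t.
Proof.
  intros HG. replace (Derive_n (fun x => rho x * cos x) 2 t) with
    (Derive (Derive (fun x => rho x * cos x)) t) by reflexivity.
  rewrite (Derive_ext _ (fun x => Derive rho x * cos x - rho x * sin x)) by (intro; apply (yc1 q); auto).
  destruct HG as (Hq & Hpos & Hper & Hd1 & Hd2 & Hl). apply is_derive_unique.
  auto_derive. repeat split; auto. change (fun x : R => rho x) with rho.
  change (fun x : R => Derive rho x) with (Derive rho). ring.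
Qed.
Lemma ys2 q rho t : good q rho -> Derive_n (fun x => rho x * sin x) 2 t =
  Derive (Derive rho) t * sin t + 2 * Derive rho t * cos t - rho t * sin t.
Proof.
  intros HG. replace (Derive_n (fun x => rho x * sin x) 2 t) with
    (Derive (Derive (fun x => rho x * sin x)) t) by reflexivity.
  rewrite (Derive_ext _ (fun x => Derive rho x * sin x + rho x * cos x)) by (intro; apply (ys1 q); auto).
  destruct HG as (Hq & Hpos & Hper & Hd1 & Hd2 & Hl). apply is_derive_unique.
  auto_derive. repeat split; auto. change (fun x : R => rho x) with rho.
  change (fun x : R => Derive rho x) with (Derive rho). ring.
Qed.
Lemma alg1 (s σ cθ sθ cT sT r0 r1 : R) :
  σ*σ = 1 -> cT*cT+sT*sT = 1 -> cθ*cθ+sθ*sθ = 1 ->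
  r1 * (s * (cT*cθ + sT*sθ) + 1) = r0 * s * (sT*cθ - cT*sθ) ->
  (- ((s * (σ*cθ) - σ*cT) * (- (r1 * sT + r0 * cT)) + (s * (σ*sθ) - σ*sT) * (r1 * cT - r0 * sT)))
   * (s * (cT*cθ + sT*sθ) + 1) = σ * r0 * (s*s - 1).
Proof. intros H1 H2 H3 E.
  set (cw := cT*cθ + sT*sθ) in *. set (sw := sT*cθ - cT*sθ) in *.
  assert (Hw : cw*cw + sw*sw = 1).
  { replace (cw*cw+sw*sw) with ((cT*cT+sT*sT)*(cθ*cθ+sθ*sθ)) by (unfold cw, sw; ring).
    rewrite H2, H3; ring. }
  transitivity (σ * (s * sw * (r1 * (s*cw+1)) + r0 * (s*cw - 1) * (s * cw + 1) - r0*(cT*cT+sT*sT - 1) * (s*cw+1))).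
  { unfold cw, sw; ring. }
  rewrite E, H2.
  transitivity (σ * r0 * (s*s*(cw*cw+sw*sw) - 1)). ring.
  rewrite Hw. ring.
Qed.
Lemma alg2 (s σ cθ sθ cT sT r0 r1 r2 : R) :
  σ*σ = 1 -> cT*cT+sT*sT = 1 -> cθ*cθ+sθ*sθ = 1 ->
  r1 * (s * (cT*cθ + sT*sθ) + 1) = r0 * s * (sT*cθ - cT*sθ) ->
  ((s * (σ*cθ) + σ*cT) * (r2 * cT - 2 * r1 * sT - r0 * cT) + (s * (σ*sθ) + σ*sT) * (r2 * sT + 2 * r1 * cT - r0 * sT))
   * (- ((σ*cT) * (r0*cT) + (σ*sT) * (r0 * sT)))
  - ((- (σ*sT)) * (r1 * cT - r0 * sT) + (σ*cT) * (r1 * sT + r0 * cT)) * ((- (σ*sT)) * (r1 * cT - r0 * sT) + (σ*cT) * (r1 * sT + r0 * cT))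
  = (- r0 * (r2 - r0) * (s * (cT*cθ + sT*sθ) + 1) + 2 * s * r0 * r1 * (sT*cθ - cT*sθ) - r0*r0).
Proof. intros H1 H2 H3 E.
  set (cw := cT*cθ + sT*sθ) in *. set (sw := sT*cθ - cT*sθ) in *.
  transitivity (σ*σ * (- r0 * (cT*cT+sT*sT) * ((r2 - r0) * (s * cw + (cT*cT+sT*sT)) - 2 * s * r1 * sw) - r0*r0*(cT*cT+sT*sT)*(cT*cT+sT*sT))).
  { unfold cw, sw; ring. }
  rewrite H1, H2. ring.
Qed.
Lemma alg3 (s cw sw D r0 r1 r2 : R) : cw*cw+sw*sw = 1 -> D = s*cw+1 -> r1 * D = r0 * s * sw ->
  (- r0 * (r2 - r0) * D + 2 * s * r0 * r1 * sw - r0*r0) * D =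
   r0*r0 * s * (s + cw) - (r2 * r0 - r1*r1) * D^2.
Proof. intros Hw HD E.
  transitivity (- r0 * (r2 - r0) * D * D + 2 * s * r0 * sw * (r1 * D) - r0*r0 * D). ring.
  rewrite E.
  transitivity (r0*r0 * s * (s + cw) - r2 * r0 * D^2 + (r0*s*sw)*(r0*s*sw) + r0*r0*s*s*(cw*cw+sw*sw - 1)).
  rewrite HD; ring.
  rewrite <- E, Hw. ring.
Qed.

Lemma eqn_mul q rho th w : good q rho -> sqrt q * cos w + 1 <> 0 -> Fl rho th = hq q w ->
  Derive rho th * (sqrt q * cos w + 1) = rho th * sqrt q * sin w.
Proof.
  intros HG HD E. pose proof HG as (Hq & Hpos & _). pose proof (Hpos th).
  unfold Fl, hq in E. apply (Rmult_eq_reg_r (/ rho th)); [|apply Rinv_neq_0_compat; lra].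
  transitivity (Derive rho th / rho th * (sqrt q * cos w + 1)). field. lra.
  rewrite E. field. split; lra.
Qed.

Lemma Psi_nz q rho te th tx thl σ : good q rho -> σ * σ = 1 ->
  cos te = σ * cos thl -> sin te = σ * sin thl -> cos tx = σ * cos th -> sin tx = σ * sin th ->
  Fl rho th = hq q (th - thl) -> sqrt q * cos (th - thl) + 1 <> 0 ->
  Psi_eta q rho te th tx <> 0.
Proof.
  intros HG Hσ E1 E2 E3 E4 Eq HD.
  pose proof (eqn_mul q rho th _ HG HD Eq) as Em.
  rewrite cos_minus, sin_minus in Em.
  pose proof HG as (Hq & Hpos & _). pose proof (Hpos th).
  unfold Psi_eta, dot, vsub, vscal, unitv, perp, yc'. cbn [fst snd].
  rewrite (yc1 q), (ys1 q) by auto. rewrite E1, E2, E3, E4.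
  assert (Hc : cos th * cos th + sin th * sin th = 1) by (rewrite <- (sin2_cos2 th); unfold Rsqr; ring).
  assert (Hl : cos thl * cos thl + sin thl * sin thl = 1) by (rewrite <- (sin2_cos2 thl); unfold Rsqr; ring).
  rewrite cos_minus in HD.
  pose proof (alg1 (sqrt q) σ (cos thl) (sin thl) (cos th) (sin th) (rho th) (Derive rho th) Hσ Hc Hl) as A.
  intro Hz. rewrite Hz in A. rewrite Rmult_0_l in A.
  assert (A' : 0 = σ * rho th * (sqrt q * sqrt q - 1)).
  { apply A. rewrite Em. ring. }
  rewrite (s_sq q Hq) in A'.
  assert (σ <> 0) by (intro; subst; lra).
  assert (σ * rho th <> 0) by (apply Rmult_integral_contrapositive; split; lra).
  assert (q - 1 <> 0) by lra.
  symmetry in A'. apply Rmult_integral in A'. tauto.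
Qed.

Lemma Det_nz q rho te th tx thl σ : good q rho -> σ * σ = 1 ->
  cos te = σ * cos thl -> sin te = σ * sin thl -> cos tx = σ * cos th -> sin tx = σ * sin th ->
  Fl rho th = hq q (th - thl) -> sqrt q * cos (th - thl) + 1 <> 0 ->
  detD2psi q rho te th tx <> 0.
Proof.
  intros HG Hσ E1 E2 E3 E4 Eq HD.
  pose proof (eqn_mul q rho th _ HG HD Eq) as Em.
  pose proof (Fd_lt q rho HG th) as HF.
  pose proof HG as (Hq & Hpos & _). pose proof (Hpos th).
  pose proof (dh_ge q (th - thl) Hq HD) as Hh.
  unfold hdv in Hh.
  rewrite cos_minus, sin_minus in Em. rewrite cos_minus in HD, Hh.
  unfold detD2psi, dot, vadd, vscal, unitv, perp, yc', yc'', yc. cbv zeta. cbn [fst snd].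
  rewrite (yc1 q), (ys1 q), (yc2 q), (ys2 q) by auto. rewrite E1, E2, E3, E4.
  assert (Hc : cos th * cos th + sin th * sin th = 1) by (rewrite <- (sin2_cos2 th); unfold Rsqr; ring).
  assert (Hl : cos thl * cos thl + sin thl * sin thl = 1) by (rewrite <- (sin2_cos2 thl); unfold Rsqr; ring).
  rewrite (alg2 (sqrt q) σ (cos thl) (sin thl) (cos th) (sin th) (rho th) (Derive rho th)
     (Derive (Derive rho) th) Hσ Hc Hl Em).
  set (cw := cos th * cos thl + sin th * sin thl) in *.
  set (sw := sin th * cos thl - cos th * sin thl) in *.
  set (D := sqrt q * cw + 1) in *.
  assert (Hw : cw*cw + sw*sw = 1).
  { replace (cw*cw+sw*sw) with ((cos th*cos th+sin th*sin th)*(cos thl*cos thl+sin thl*sin thl)) by (unfold cw, sw; ring).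
    rewrite Hc, Hl; ring. }
  replace (cos th * cos thl + sin th * sin thl) with cw by reflexivity.
  replace (sin th * cos thl - cos th * sin thl) with sw by reflexivity.
  fold D.
  pose proof (alg3 (sqrt q) cw sw D (rho th) (Derive rho th) (Derive (Derive rho) th) Hw eq_refl Em) as A.
  intro Hz. rewrite Hz, Rmult_0_l in A.
  unfold Fd in HF.
  set (r0 := rho th) in *. set (r1 := Derive rho th) in *. set (r2 := Derive (Derive rho) th) in *.
  assert (HD2 : 0 < D ^ 2) by (apply pow2_gt_0; auto).
  assert (Hr2 : 0 < r0 ^ 2) by (apply pow2_gt_0; lra).
  assert (X : (r2 * r0 - r1 ^ 2) / r0 ^ 2 < sqrt q * (sqrt q + cw) / D ^ 2) by lra.
  assert (X1 : (r2 * r0 - r1 ^ 2) < sqrt q * (sqrt q + cw) / D ^ 2 * r0 ^ 2).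
  { apply (Rmult_lt_compat_r (r0 ^ 2)) in X; auto.
    replace ((r2 * r0 - r1 ^ 2) / r0 ^ 2 * r0 ^ 2) with (r2 * r0 - r1 ^ 2) in X by (field; lra). auto. }
  apply (Rmult_lt_compat_r (D ^ 2)) in X1; auto.
  replace (sqrt q * (sqrt q + cw) / D ^ 2 * r0 ^ 2 * D ^ 2) with (r0 * r0 * sqrt q * (sqrt q + cw)) in X1
    by (field; auto).
  replace ((r2 * r0 - r1 ^ 2) * D ^ 2) with ((r2 * r0 - r1 * r1) * D ^ 2) in X1 by ring.
  lra.
Qed.

Lemma thl1 te : theta_l 1 te = te.
Proof. unfold theta_l. simpl. ring. Qed.
Lemma thl2 te : theta_l 2 te = te + PI.
Proof. unfold theta_l. simpl. ring. Qed.

Lemma Dnz q rho j l te : good q rho -> (j = 1 \/ j = 2)%nat ->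
  sqrt q * cos (Tjl q rho j l te - theta_l l te) + 1 <> 0.
Proof.
  intros HG Hj. pose proof HG as (Hq & _).
  pose proof (T_spec q rho j l te HG Hj) as (HI & _).
  destruct Hj as [-> | ->]; simpl in HI.
  - apply Rgt_not_eq. apply (range1 q). auto. lra.
  - set (x := Tjl q rho 2 l te - theta_l l te - PI).
    replace (Tjl q rho 2 l te - theta_l l te) with (x + PI) by (unfold x; ring).
    rewrite neg_cos. assert (H := range2 q x Hq ltac:(unfold x; lra)). lra.
Qed.

Lemma geom_nz q rho j l te : good q rho -> (j = 1 \/ j = 2)%nat -> (l = 1 \/ l = 2)%nat ->
  PSI q rho j l te <> 0 /\ DET q rho j l te <> 0.
Proof.
  intros HG Hj Hl.
  pose proof (T_spec q rho j l te HG Hj) as (_ & HE).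
  rewrite (Derive_ln q rho HG) in HE.
  pose proof (Dnz q rho j l te HG Hj) as HD.
  unfold PSI, DET, Sjl.
  set (T := Tjl q rho j l te) in *.
  destruct Hl as [-> | ->]; simpl Nat.eqb; cbv iota.
  - rewrite thl1 in HE, HD. rewrite Rplus_0_r.
    split; [eapply (Psi_nz q rho te T T te 1) | eapply (Det_nz q rho te T T te 1)]; auto; ring.
  - rewrite thl2 in HE, HD.
    split; [eapply (Psi_nz q rho te T (T + PI) (te + PI) (-1)) | eapply (Det_nz q rho te T (T + PI) (te + PI) (-1))];
      auto; try ring; rewrite ?neg_cos, ?neg_sin; ring.
Qed.

Lemma f_facts q rho te : good q rho -> Derive rho te * Derive rho (te + PI) <> 0 ->
  fjl q rho 1 1 te <> fjl q rho 2 2 te /\ fjl q rho 1 2 te <> fjl q rho 2 1 te /\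
  ~ (fjl q rho 1 1 te = fjl q rho 2 1 te /\ fjl q rho 1 2 te = fjl q rho 2 2 te).
Proof.
  intros HG Hd. pose proof HG as (Hq & Hpos & Hper & _).
  assert (Ha : Fl rho te <> 0).
  { unfold Fl. intro H. apply Hd. pose proof (Hpos te).
    assert (Derive rho te = 0). { apply (Rmult_eq_reg_r (/ rho te)). rewrite Rmult_0_l. exact H.
      apply Rinv_neq_0_compat; lra. }
    rewrite H1. ring. }
  assert (Hb : Fl rho (te + PI) <> 0).
  { unfold Fl. intro H. apply Hd. pose proof (Hpos (te + PI)).
    assert (Derive rho (te + PI) = 0). { apply (Rmult_eq_reg_r (/ rho (te + PI))). rewrite Rmult_0_l. exact H.
      apply Rinv_neq_0_compat; lra. }
    rewrite H1. ring. }
  pose proof (T_spec q rho 1 1 te HG ltac:(auto)) as (I11 & E11).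
  pose proof (T_spec q rho 1 2 te HG ltac:(auto)) as (I12 & E12).
  pose proof (T_spec q rho 2 1 te HG ltac:(auto)) as (I21 & E21).
  pose proof (T_spec q rho 2 2 te HG ltac:(auto)) as (I22 & E22).
  simpl in I11, I12, I21, I22.
  rewrite (Derive_ln q rho HG) in E11, E12, E21, E22.
  rewrite thl1 in I11, I21, E11, E21. rewrite thl2 in I12, I22, E12, E22.
  unfold fjl.
  set (T11 := Tjl q rho 1 1 te) in *. set (T12 := Tjl q rho 1 2 te) in *.
  set (T21 := Tjl q rho 2 1 te) in *. set (T22 := Tjl q rho 2 2 te) in *.
  set (x1 := T11 - te). set (x2 := T22 - te - 2 * PI).
  assert (C1 := core q rho te x1 x2 HG).
  replace (te + x1) with T11 in C1 by (unfold x1; ring).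
  replace (te + x2) with (T22 - 2 * PI) in C1 by (unfold x2; ring).
  assert (Hr22 : rho (T22 - 2 * PI) = rho T22).
  { rewrite <- Hper. f_equal. ring. }
  assert (Hf22 : Fl rho (T22 - 2 * PI) = Fl rho T22).
  { rewrite <- (Fl_per q rho HG). f_equal. ring. }
  rewrite Hr22, Hf22 in C1.
  assert (Hs22 : sin x2 = sin (T22 - te)).
  { rewrite <- sin_2pi. f_equal. unfold x2. ring. }
  rewrite Hs22 in C1. fold x1 in I11.
  specialize (C1 ltac:(unfold x1; lra) ltac:(unfold x1 in *; rewrite E11; reflexivity)
     ltac:(unfold x2; lra)).
  specialize (C1 ltac:(rewrite E22; f_equal; unfold x2; ring) Ha).
  set (y1 := T12 - (te + PI)). set (y2 := T21 - (te + PI)).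
  assert (C2 := core q rho (te + PI) y1 y2 HG).
  replace (te + PI + y1) with T12 in C2 by (unfold y1; ring).
  replace (te + PI + y2) with T21 in C2 by (unfold y2; ring).
  assert (Hs12 : sin y1 = - sin (T12 - te)).
  { replace (T12 - te) with (y1 + PI) by (unfold y1; ring). rewrite neg_sin. ring. }
  assert (Hs21 : sin y2 = - sin (T21 - te)).
  { replace (T21 - te) with (y2 + PI) by (unfold y2; ring). rewrite neg_sin. ring. }
  rewrite Hs12, Hs21 in C2.
  specialize (C2 ltac:(unfold y1; lra) ltac:(unfold y1 in *; rewrite E12; reflexivity)
     ltac:(unfold y2; lra)).
  specialize (C2 ltac:(rewrite E21; f_equal; unfold y2; ring) Hb).
  set (f11 := rho T11 * sin (T11 - te)) in *.
  set (f12 := rho T12 * sin (T12 - te)) in *.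
  set (f21 := rho T21 * sin (T21 - te)) in *.
  set (f22 := rho T22 * sin (T22 - te)) in *.
  replace (rho T12 * - sin (T12 - te)) with (- f12) in C2 by (unfold f12; match goal with |- ?g => idtac g end; ring).
  replace (rho T21 * - sin (T21 - te)) with (- f21) in C2 by (unfold f21; ring).
  destruct C1 as [C1|C1]; destruct C2 as [C2|C2]; repeat split; intros; try lra.
Qed.

Lemma lim_fst (u : nat -> C) : filterlim u eventually (locally (RtoC 0)) ->
  is_lim_seq (fun n => fst (u n)) 0 /\ is_lim_seq (fun n => snd (u n)) 0.
Proof.
  intro H. rewrite filterlim_locally in H. split; unfold is_lim_seq;
  apply filterlim_locally; intro eps; specialize (H eps); destruct H as [N HN]; exists N;
  intros n Hn; destruct (HN n Hn) as [H1 H2]; assumption.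
Qed.

Definition S4 (f w : nat -> R) (v : nat -> nat -> R) (N : nat) (n : nat) : R :=
  f 0%nat ^ N * w 0%nat * v 0%nat n + f 1%nat ^ N * w 1%nat * v 1%nat n +
  f 2%nat ^ N * w 2%nat * v 2%nat n + f 3%nat ^ N * w 3%nat * v 3%nat n.

Lemma step4 f v w t : (forall N, is_lim_seq (S4 f w v N) 0) ->
  forall N, is_lim_seq (S4 f (fun i => (f i - t) * w i) v N) 0.
Proof.
  intros H N.
  apply (is_lim_seq_ext (fun n => S4 f w v (S N) n - t * S4 f w v N n)).
  { intro n. unfold S4. simpl. ring. }
  replace (Finite 0) with (Finite (0 - t * 0)) by (f_equal; ring).
  apply is_lim_seq_minus'. apply H. apply (is_lim_seq_scal_l _ t 0). apply H.
Qed.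

Definition prodw (a : R) (L : list R) : R := fold_right Rmult 1 (map (fun t => a - t) L).

Lemma stepL f v L : (forall N, is_lim_seq (S4 f (fun _ => 1) v N) 0) ->
  forall N, is_lim_seq (S4 f (fun i => prodw (f i) L) v N) 0.
Proof.
  intro H. induction L as [|t L IH].
  - unfold prodw. simpl. exact H.
  - intro N. apply (is_lim_seq_ext (S4 f (fun i => (f i - t) * prodw (f i) L) v N)).
    { intro n. reflexivity. }
    apply step4. exact IH.
Qed.

Lemma prodw_zero a L : In a L -> prodw a L = 0.
Proof.
  induction L as [|t L IH]; simpl; [tauto|]. intros [->|H].
  - unfold prodw. simpl. ring.
  - unfold prodw in *. simpl. rewrite IH by auto. ring.
Qed.

Lemma prodw_nz a L : (forall t, In t L -> t <> a) -> prodw a L <> 0.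
Proof.
  induction L as [|t L IH]; intro H; unfold prodw; simpl.
  - lra.
  - apply Rmult_integral_contrapositive. split.
    + intro E. apply (H t); [left; auto| lra].
    + apply IH. intros; apply H; right; auto.
Qed.

Definition G4 (f : nat -> R) (v : nat -> nat -> R) (r : R) (n : nat) : R :=
  (if Req_EM_T (f 0%nat) r then v 0%nat n else 0) + (if Req_EM_T (f 1%nat) r then v 1%nat n else 0) +
  (if Req_EM_T (f 2%nat) r then v 2%nat n else 0) + (if Req_EM_T (f 3%nat) r then v 3%nat n else 0).

Lemma group4 f v r : (forall N, is_lim_seq (S4 f (fun _ => 1) v N) 0) ->
  is_lim_seq (G4 f v r) 0.
Proof.
  intro H.
  set (L := filter (fun t => if Req_EM_T t r then false else true) [f 0%nat; f 1%nat; f 2%nat; f 3%nat]).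
  set (W := prodw r L).
  assert (HW : W <> 0).
  { apply prodw_nz. intros t Ht. unfold L in Ht. apply filter_In in Ht as [_ Ht].
    destruct (Req_EM_T t r); congruence. }
  assert (Hw : forall i, (i = 0 \/ i = 1 \/ i = 2 \/ i = 3)%nat ->
     prodw (f i) L = if Req_EM_T (f i) r then W else 0).
  { intros i Hi. destruct (Req_EM_T (f i) r) as [E|E].
    - rewrite E. reflexivity.
    - apply prodw_zero. unfold L. apply filter_In. split.
      + simpl. destruct Hi as [ -> | [ -> | [ -> | -> ]]]; auto 6.
      + destruct (Req_EM_T (f i) r); congruence. }
  pose proof (stepL f v L H 0%nat) as H0.
  apply (is_lim_seq_scal_l _ (/ W) 0) in H0.
  replace (Rbar_mult (/ W) 0) with (Finite 0) in H0 by (simpl; f_equal; ring).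
  eapply is_lim_seq_ext; [|exact H0].
  intro n. unfold S4, G4. rewrite !Hw by auto 6. simpl.
  destruct (Req_EM_T (f 0%nat) r); destruct (Req_EM_T (f 1%nat) r);
  destruct (Req_EM_T (f 2%nat) r); destruct (Req_EM_T (f 3%nat) r); field; auto.
Qed.

Lemma lim_bound c (x y : nat -> R) : (forall n, c <= Rabs (x n) + Rabs (y n)) ->
  is_lim_seq x 0 -> is_lim_seq y 0 -> c <= 0.
Proof.
  intros H Hx Hy.
  assert (Hs : is_lim_seq (fun n => Rabs (x n) + Rabs (y n)) 0).
  { replace (Finite 0) with (Finite (Rabs 0 + Rabs 0)) by (f_equal; rewrite Rabs_R0; ring).
    apply is_lim_seq_plus'; [apply (is_lim_seq_abs x 0) | apply (is_lim_seq_abs y 0)]; auto. }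
  pose proof (is_lim_seq_le (fun _ => c) _ c 0 H (is_lim_seq_const c) Hs). simpl in H0. auto.
Qed.

Lemma norm_le a b : sqrt (a ^ 2 + b ^ 2) <= Rabs a + Rabs b.
Proof.
  rewrite <- (sqrt_pow2 (Rabs a + Rabs b)) by (pose proof (Rabs_pos a); pose proof (Rabs_pos b); lra).
  apply sqrt_le_1_alt.
  rewrite <- (pow2_abs a), <- (pow2_abs b).
  pose proof (Rabs_pos a); pose proof (Rabs_pos b). nra.
Qed.

Lemma rev_tri a b c d : sqrt (a ^ 2 + b ^ 2) - sqrt (c ^ 2 + d ^ 2) <= sqrt ((a + c) ^ 2 + (b + d) ^ 2).
Proof.
  pose proof (Cmod_triangle (a + c, b + d) (- c, - d)) as H.
  unfold Cmod in H. simpl fst in H. simpl snd in H.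
  replace (a + c + - c) with a in H by ring. replace (b + d + - d) with b in H by ring.
  replace ((- c) ^ 2) with (c ^ 2) in H by ring. replace ((- d) ^ 2) with (d ^ 2) in H by ring.
  change (sqrt (a ^ 2 + b ^ 2) <= sqrt ((a + c) ^ 2 + (b + d) ^ 2) + sqrt (c ^ 2 + d ^ 2)) in H.
  lra.
Qed.


Lemma single_gen (A0 : R) (x y : nat -> R) :
  (forall n, sqrt (x n ^ 2 + y n ^ 2) = A0) -> is_lim_seq x 0 -> is_lim_seq y 0 -> A0 = 0.
Proof.
  intros H Hx Hy.
  assert (A0 <= 0). { apply (lim_bound A0 x y); auto. intro n. rewrite <- (H n). apply norm_le. }
  assert (0 <= A0) by (rewrite <- (H 0%nat); apply sqrt_pos). lra.
Qed.

Lemma pair_gen (A0 A1 : R) (x0 y0 x1 y1 : nat -> R) :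
  (forall n, sqrt (x0 n ^ 2 + y0 n ^ 2) = A0) -> (forall n, sqrt (x1 n ^ 2 + y1 n ^ 2) = A1) ->
  is_lim_seq (fun n => x0 n + x1 n) 0 -> is_lim_seq (fun n => y0 n + y1 n) 0 -> A0 = A1.
Proof.
  intros H0 H1 Hx Hy.
  assert (A0 - A1 <= 0).
  { apply (lim_bound _ (fun n => x0 n + x1 n) (fun n => y0 n + y1 n)); auto. intro n.
    eapply Rle_trans; [|apply norm_le].
    rewrite <- (H0 n), <- (H1 n). apply rev_tri. }
  assert (A1 - A0 <= 0).
  { apply (lim_bound _ (fun n => x0 n + x1 n) (fun n => y0 n + y1 n)); auto. intro n.
    eapply Rle_trans; [|apply norm_le].
    rewrite <- (H0 n), <- (H1 n).
    replace (x0 n + x1 n) with (x1 n + x0 n) by ring. replace (y0 n + y1 n) with (y1 n + y0 n) by ring.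
    apply rev_tri. }
  lra.
Qed.

Lemma zero_of_norm (x y : R) : sqrt (x ^ 2 + y ^ 2) = 0 -> x = 0 /\ y = 0.
Proof.
  intro H. apply sqrt_eq_0 in H; [|nra]. split; nra.
Qed.

Ltac kill := repeat match goal with
 | e : ?u = ?w, H : ?w = ?u -> _ |- _ => specialize (H (eq_sym e))
 | e : ?u = ?w, H : ?u = ?w -> _ |- _ => specialize (H e)
 end.
Ltac rwz := repeat match goal with H : forall n : nat, ?v ?i n = 0 |- _ => rewrite H end.

Ltac g4 f r := unfold G4;
  destruct (Req_EM_T (f 0%nat) r); destruct (Req_EM_T (f 1%nat) r);
  destruct (Req_EM_T (f 2%nat) r); destruct (Req_EM_T (f 3%nat) r);
  try (exfalso; congruence); kill; rwz; ring.

Lemma abstract4 (ff A : nat -> R) (re im : nat -> nat -> R) :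
 (forall i n, sqrt (re i n ^ 2 + im i n ^ 2) = A i) ->
 (forall N, is_lim_seq (S4 ff (fun _ => 1) re N) 0) ->
 (forall N, is_lim_seq (S4 ff (fun _ => 1) im N) 0) ->
 ff 0%nat <> ff 3%nat -> ff 1%nat <> ff 2%nat ->
 ((ff 0%nat = ff 1%nat -> A 1%nat = 0) -> (ff 0%nat = ff 2%nat -> A 2%nat = 0) -> A 0%nat = 0) /\
 ((ff 1%nat = ff 0%nat -> A 0%nat = 0) -> (ff 1%nat = ff 3%nat -> A 3%nat = 0) -> A 1%nat = 0) /\
 ((ff 2%nat = ff 0%nat -> A 0%nat = 0) -> (ff 2%nat = ff 3%nat -> A 3%nat = 0) -> A 2%nat = 0) /\
 ((ff 3%nat = ff 1%nat -> A 1%nat = 0) -> (ff 3%nat = ff 2%nat -> A 2%nat = 0) -> A 3%nat = 0) /\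
 (ff 0%nat = ff 1%nat -> A 0%nat = A 1%nat) /\ (ff 0%nat = ff 2%nat -> A 0%nat = A 2%nat) /\
 (ff 3%nat = ff 1%nat -> A 3%nat = A 1%nat) /\ (ff 3%nat = ff 2%nat -> A 3%nat = A 2%nat).
Proof.
  intros HA Hre Him N03 N12.
  assert (Z : forall i, A i = 0 -> (forall n, re i n = 0) /\ (forall n, im i n = 0)).
  { intros i Hi. split; intro n; pose proof (HA i n) as E; rewrite Hi in E;
    apply zero_of_norm in E; tauto. }
  assert (ZR : forall i, A i = 0 -> forall n, re i n = 0) by (intros; apply Z; auto).
  assert (ZI : forall i, A i = 0 -> forall n, im i n = 0) by (intros; apply Z; auto).
  clear Z.
  pose proof (fun r => group4 ff re r Hre) as GR.
  pose proof (fun r => group4 ff im r Him) as GI.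
  split; [|split; [|split; [|split; [|split; [|split; [|split]]]]]].
  - intros H1 H2.
    assert (R1 : ff 0%nat = ff 1%nat -> forall n, re 1%nat n = 0) by (intros e; apply ZR, H1, e).
    assert (R2 : ff 0%nat = ff 2%nat -> forall n, re 2%nat n = 0) by (intros e; apply ZR, H2, e).
    assert (I1 : ff 0%nat = ff 1%nat -> forall n, im 1%nat n = 0) by (intros e; apply ZI, H1, e).
    assert (I2 : ff 0%nat = ff 2%nat -> forall n, im 2%nat n = 0) by (intros e; apply ZI, H2, e).
    clear H1 H2.
    apply (single_gen (A 0%nat) (re 0%nat) (im 0%nat)); auto.
    + eapply is_lim_seq_ext; [|apply (GR (ff 0%nat))]. intro n. g4 ff (ff 0%nat).
    + eapply is_lim_seq_ext; [|apply (GI (ff 0%nat))]. intro n. g4 ff (ff 0%nat).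
  - intros H1 H2.
    assert (R1 : ff 1%nat = ff 0%nat -> forall n, re 0%nat n = 0) by (intros e; apply ZR, H1, e).
    assert (R2 : ff 1%nat = ff 3%nat -> forall n, re 3%nat n = 0) by (intros e; apply ZR, H2, e).
    assert (I1 : ff 1%nat = ff 0%nat -> forall n, im 0%nat n = 0) by (intros e; apply ZI, H1, e).
    assert (I2 : ff 1%nat = ff 3%nat -> forall n, im 3%nat n = 0) by (intros e; apply ZI, H2, e).
    clear H1 H2.
    apply (single_gen (A 1%nat) (re 1%nat) (im 1%nat)); auto.
    + eapply is_lim_seq_ext; [|apply (GR (ff 1%nat))]. intro n. g4 ff (ff 1%nat).
    + eapply is_lim_seq_ext; [|apply (GI (ff 1%nat))]. intro n. g4 ff (ff 1%nat).
  - intros H1 H2.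
    assert (R1 : ff 2%nat = ff 0%nat -> forall n, re 0%nat n = 0) by (intros e; apply ZR, H1, e).
    assert (R2 : ff 2%nat = ff 3%nat -> forall n, re 3%nat n = 0) by (intros e; apply ZR, H2, e).
    assert (I1 : ff 2%nat = ff 0%nat -> forall n, im 0%nat n = 0) by (intros e; apply ZI, H1, e).
    assert (I2 : ff 2%nat = ff 3%nat -> forall n, im 3%nat n = 0) by (intros e; apply ZI, H2, e).
    clear H1 H2.
    apply (single_gen (A 2%nat) (re 2%nat) (im 2%nat)); auto.
    + eapply is_lim_seq_ext; [|apply (GR (ff 2%nat))]. intro n. g4 ff (ff 2%nat).
    + eapply is_lim_seq_ext; [|apply (GI (ff 2%nat))]. intro n. g4 ff (ff 2%nat).
  - intros H1 H2.
    assert (R1 : ff 3%nat = ff 1%nat -> forall n, re 1%nat n = 0) by (intros e; apply ZR, H1, e).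
    assert (R2 : ff 3%nat = ff 2%nat -> forall n, re 2%nat n = 0) by (intros e; apply ZR, H2, e).
    assert (I1 : ff 3%nat = ff 1%nat -> forall n, im 1%nat n = 0) by (intros e; apply ZI, H1, e).
    assert (I2 : ff 3%nat = ff 2%nat -> forall n, im 2%nat n = 0) by (intros e; apply ZI, H2, e).
    clear H1 H2.
    apply (single_gen (A 3%nat) (re 3%nat) (im 3%nat)); auto.
    + eapply is_lim_seq_ext; [|apply (GR (ff 3%nat))]. intro n. g4 ff (ff 3%nat).
    + eapply is_lim_seq_ext; [|apply (GI (ff 3%nat))]. intro n. g4 ff (ff 3%nat).
  - intros e0.
    apply (pair_gen (A 0%nat) (A 1%nat) (re 0%nat) (im 0%nat) (re 1%nat) (im 1%nat)); auto.
    + eapply is_lim_seq_ext; [|apply (GR (ff 0%nat))]. intro n. g4 ff (ff 0%nat).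
    + eapply is_lim_seq_ext; [|apply (GI (ff 0%nat))]. intro n. g4 ff (ff 0%nat).
  - intros e0.
    apply (pair_gen (A 0%nat) (A 2%nat) (re 0%nat) (im 0%nat) (re 2%nat) (im 2%nat)); auto.
    + eapply is_lim_seq_ext; [|apply (GR (ff 0%nat))]. intro n. g4 ff (ff 0%nat).
    + eapply is_lim_seq_ext; [|apply (GI (ff 0%nat))]. intro n. g4 ff (ff 0%nat).
  - intros e0.
    apply (pair_gen (A 3%nat) (A 1%nat) (re 3%nat) (im 3%nat) (re 1%nat) (im 1%nat)); auto.
    + eapply is_lim_seq_ext; [|apply (GR (ff 3%nat))]. intro n. g4 ff (ff 3%nat).
    + eapply is_lim_seq_ext; [|apply (GI (ff 3%nat))]. intro n. g4 ff (ff 3%nat).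
  - intros e0.
    apply (pair_gen (A 3%nat) (A 2%nat) (re 3%nat) (im 3%nat) (re 2%nat) (im 2%nat)); auto.
    + eapply is_lim_seq_ext; [|apply (GR (ff 3%nat))]. intro n. g4 ff (ff 3%nat).
    + eapply is_lim_seq_ext; [|apply (GI (ff 3%nat))]. intro n. g4 ff (ff 3%nat).
Qed.

Definition cnt (A : nat -> R) : nat :=
  ((if Req_EM_T (A 0%nat) 0 then 0 else 1) + (if Req_EM_T (A 1%nat) 0 then 0 else 1) +
   (if Req_EM_T (A 2%nat) 0 then 0 else 1) + (if Req_EM_T (A 3%nat) 0 then 0 else 1))%nat.

Ltac leafc A S0 S1 S2 S3 :=
  first [ exfalso; match goal with n : A 0%nat <> 0 |- _ => apply n end; apply S0; intro; first [exfalso; congruence | assumption]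
        | exfalso; match goal with n : A 1%nat <> 0 |- _ => apply n end; apply S1; intro; first [exfalso; congruence | assumption]
        | exfalso; match goal with n : A 2%nat <> 0 |- _ => apply n end; apply S2; intro; first [exfalso; congruence | assumption]
        | exfalso; match goal with n : A 3%nat <> 0 |- _ => apply n end; apply S3; intro; first [exfalso; congruence | assumption]
        | idtac ].

Lemma combi (f A : nat -> R) :
 f 0%nat <> f 3%nat -> f 1%nat <> f 2%nat -> ~ (f 0%nat = f 2%nat /\ f 1%nat = f 3%nat) ->
 ((f 0%nat = f 1%nat -> A 1%nat = 0) -> (f 0%nat = f 2%nat -> A 2%nat = 0) -> A 0%nat = 0) ->
 ((f 1%nat = f 0%nat -> A 0%nat = 0) -> (f 1%nat = f 3%nat -> A 3%nat = 0) -> A 1%nat = 0) ->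
 ((f 2%nat = f 0%nat -> A 0%nat = 0) -> (f 2%nat = f 3%nat -> A 3%nat = 0) -> A 2%nat = 0) ->
 ((f 3%nat = f 1%nat -> A 1%nat = 0) -> (f 3%nat = f 2%nat -> A 2%nat = 0) -> A 3%nat = 0) ->
 (f 0%nat = f 1%nat -> A 0%nat = A 1%nat) -> (f 0%nat = f 2%nat -> A 0%nat = A 2%nat) ->
 (f 3%nat = f 1%nat -> A 3%nat = A 1%nat) -> (f 3%nat = f 2%nat -> A 3%nat = A 2%nat) ->
 (cnt A = 0 \/ cnt A = 2 \/ cnt A = 4)%nat /\
 (cnt A = 4%nat -> f 0%nat = f 1%nat /\ A 0%nat = A 1%nat /\ f 2%nat = f 3%nat /\ A 2%nat = A 3%nat) /\
 (cnt A = 2%nat -> forall p r, (p < 4)%nat -> (r < 4)%nat -> p <> r -> A p <> 0 -> A r <> 0 ->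
    ~ ((p = 0 /\ r = 3) \/ (p = 3 /\ r = 0))%nat /\ ~ ((p = 2 /\ r = 1) \/ (p = 1 /\ r = 2))%nat /\
    f p = f r /\ A p = A r).
Proof.
  intros N03 N12 NB S0 S1 S2 S3 P01 P02 P31 P32.
  unfold cnt.
  destruct (Req_EM_T (A 0%nat) 0) as [a0|a0]; destruct (Req_EM_T (A 1%nat) 0) as [a1|a1];
  destruct (Req_EM_T (A 2%nat) 0) as [a2|a2]; destruct (Req_EM_T (A 3%nat) 0) as [a3|a3];
  destruct (Req_EM_T (f 0%nat) (f 1%nat)) as [e01|e01];
  destruct (Req_EM_T (f 0%nat) (f 2%nat)) as [e02|e02];
  destruct (Req_EM_T (f 3%nat) (f 1%nat)) as [e31|e31];
  destruct (Req_EM_T (f 3%nat) (f 2%nat)) as [e32|e32];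
  leafc A S0 S1 S2 S3;
  try (exfalso; congruence);
  try (exfalso; apply NB; split; congruence);
  (split; [simpl; lia|split;
  [ simpl; intro Hc; try lia; repeat split; first [congruence | solve [auto] | symmetry; solve [auto]]
  | simpl; intros Hc p r Hp Hr Hpr Ap Ar; try lia;
    assert (Hp' : (p = 0 \/ p = 1 \/ p = 2 \/ p = 3)%nat) by lia;
    assert (Hr' : (r = 0 \/ r = 1 \/ r = 2 \/ r = 3)%nat) by lia;
    destruct Hp' as [-> | [-> | [-> | ->]]]; destruct Hr' as [-> | [-> | [-> | ->]]];
    try congruence; try lia;
    (split; [lia|split; [lia| split; [try congruence | try (symmetry; auto; fail); auto]]]) ]]).
Qed.

Definition jj (i : nat) : nat := match i with 0 | 1 => 1 | _ => 2 end%nat.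
Definition ll (i : nat) : nat := match i with 0 => 1 | 1 => 2 | 2 => 1 | _ => 2 end%nat.

Definition uuC q rho (phi : R -> C) (k : nat -> R) te j l n : C :=
  Cmult (Cmult (RtoC (PSI q rho j l te / sqrt (Rabs (DET q rho j l te)))) (phi (Sjl q rho j l te)))
        (cis (phase j l + k n * PSIsmall q rho j l te)).

Lemma fst_Cplus (a b : C) : fst (Cplus a b) = fst a + fst b.
Proof. destruct a, b; reflexivity. Qed.
Lemma snd_Cplus (a b : C) : snd (Cplus a b) = snd a + snd b.
Proof. destruct a, b; reflexivity. Qed.

Lemma summand_split q rho phi j l N kk te :
  fst (summand q rho phi j l N kk te) =
    fjl q rho j l te ^ N * fst (uuC q rho phi (fun _ => kk) te j l 0%nat) /\
  snd (summand q rho phi j l N kk te) =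
    fjl q rho j l te ^ N * snd (uuC q rho phi (fun _ => kk) te j l 0%nat).
Proof.
  unfold summand, uuC.
  destruct (phi (Sjl q rho j l te)) as [z1 z2].
  destruct (cis (phase j l + kk * PSIsmall q rho j l te)) as [w1 w2].
  unfold Cmult, RtoC. simpl. unfold Rdiv. split; ring.
Qed.

Lemma Cmod_uu q rho phi k te j l n : good q rho -> (j = 1 \/ j = 2)%nat -> (l = 1 \/ l = 2)%nat ->
  Cmod (uuC q rho phi k te j l n) = ampl q rho phi j l te.
Proof.
  intros HG Hj Hl. destruct (geom_nz q rho j l te HG Hj Hl) as [HP HD].
  unfold uuC, ampl. rewrite !Cmod_mult, Cmod_R.
  assert (Hc : Cmod (cis (phase j l + k n * PSIsmall q rho j l te)) = 1).
  { unfold Cmod, cis. simpl fst. simpl snd.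
    replace (cos (phase j l + k n * PSIsmall q rho j l te) ^ 2 + sin (phase j l + k n * PSIsmall q rho j l te) ^ 2) with 1.
    apply sqrt_1. rewrite <- (sin2_cos2 (phase j l + k n * PSIsmall q rho j l te)). unfold Rsqr. ring. }
  rewrite Hc.
  assert (Hs : 0 < sqrt (Rabs (DET q rho j l te))) by (apply sqrt_lt_R0; apply Rabs_pos_lt; auto).
  rewrite Rabs_div by lra. rewrite (Rabs_pos_eq (sqrt _)) by lra. field. lra.
Qed.

Lemma ampl_zero q rho phi j l te : good q rho -> (j = 1 \/ j = 2)%nat -> (l = 1 \/ l = 2)%nat ->
  (ampl q rho phi j l te = 0 <-> phi (Sjl q rho j l te) = 0).
Proof.
  intros HG Hj Hl. destruct (geom_nz q rho j l te HG Hj Hl) as [HP HD].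
  assert (Hs : 0 < sqrt (Rabs (DET q rho j l te))) by (apply sqrt_lt_R0; apply Rabs_pos_lt; auto).
  assert (Ha : 0 < Rabs (PSI q rho j l te)) by (apply Rabs_pos_lt; auto).
  unfold ampl. split.
  - intro H. apply Cmod_eq_0.
    apply (Rmult_eq_reg_r (Rabs (PSI q rho j l te) / sqrt (Rabs (DET q rho j l te)))).
    + rewrite Rmult_0_l. rewrite <- H. field. lra.
    + apply Rgt_not_eq. apply Rdiv_lt_0_compat; auto.
  - intro H. rewrite H, Cmod_0. unfold Rdiv. ring.
Qed.

Lemma len_filter4 {T} (g : T -> bool) a b c d :
  length (filter g [a; b; c; d]) =
  ((if g a then 1 else 0) + (if g b then 1 else 0) + (if g c then 1 else 0) + (if g d then 1 else 0))%nat.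
Proof. simpl. destruct (g a), (g b), (g c), (g d); reflexivity. Qed.

Lemma propb_ampl q rho phi j l te : good q rho -> (j = 1 \/ j = 2)%nat -> (l = 1 \/ l = 2)%nat ->
  (if propb (in_Lambda q rho phi j l te) then 1 else 0)%nat =
  (if Req_EM_T (ampl q rho phi j l te) 0 then 0 else 1)%nat.
Proof.
  intros HG Hj Hl. pose proof (ampl_zero q rho phi j l te HG Hj Hl) as E.
  unfold propb, in_Lambda.
  destruct (excluded_middle_informative _) as [H|H]; destruct (Req_EM_T _ _) as [H'|H']; auto.
  - exfalso. destruct H as (_ & _ & H). apply H, E, H'.
  - exfalso. apply H. split; [auto|split; [auto|]]. intro Z. apply H', E, Z.
Qed.

Theorem corollary2 (q : R) (rho : R -> R) (phi : R -> C) (k : nat -> R) :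
  1 < q ->
  (forall t, 0 < rho t) ->
  (forall t, rho (t + 2 * PI) = rho t) ->
  (forall t, ex_derive rho t) ->
  (forall t, ex_derive (Derive rho) t) ->
  (forall t, continuous (Derive_n rho 2) t) ->
  (forall t, Derive_n (fun x => ln (rho x)) 2 t < sqrt q / (1 + sqrt q)) ->
  (forall t, phi (t + 2 * PI) = phi t) ->
  (forall t, continuous phi t) ->
  (forall n, 0 < k n) ->
  is_lim_seq k p_infty ->
  (forall (te : R) (N : nat),
      filterlim (fun n => full_sum q rho phi N (k n) te) eventually (locally (RtoC 0))) ->
  forall te : R,
  Derive rho te * Derive rho (te + PI) <> 0 ->
  (card_Lambda q rho phi te = 0%nat \/ card_Lambda q rho phi te = 2%nat \/
   card_Lambda q rho phi te = 4%nat) /\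
  (card_Lambda q rho phi te = 4%nat ->
     forall j : nat, (j = 1%nat \/ j = 2%nat) ->
       fjl q rho j 1 te = fjl q rho j 2 te /\
       ampl q rho phi j 1 te = ampl q rho phi j 2 te) /\
  (card_Lambda q rho phi te = 2%nat ->
     forall j1 l1 j2 l2 : nat,
       (j1, l1) <> (j2, l2) ->
       in_Lambda q rho phi j1 l1 te -> in_Lambda q rho phi j2 l2 te ->
       ~ (((j1, l1) = (1, 1)%nat /\ (j2, l2) = (2, 2)%nat) \/
          ((j1, l1) = (2, 2)%nat /\ (j2, l2) = (1, 1)%nat)) /\
       ~ (((j1, l1) = (2, 1)%nat /\ (j2, l2) = (1, 2)%nat) \/
          ((j1, l1) = (1, 2)%nat /\ (j2, l2) = (2, 1)%nat)) /\
       fjl q rho j1 l1 te = fjl q rho j2 l2 te /\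
       ampl q rho phi j1 l1 te = ampl q rho phi j2 l2 te).
Proof.
  intros Hq Hpos Hper Hd1 Hd2 _ Hl _ _ _ _ Hlim te Hd.
  assert (HG : good q rho) by (repeat split; auto).
  assert (Hjj : forall i, (jj i = 1 \/ jj i = 2)%nat) by (intro i; destruct i as [|[|[|]]]; simpl; auto).
  assert (Hll : forall i, (ll i = 1 \/ ll i = 2)%nat) by (intro i; destruct i as [|[|[|]]]; simpl; auto).
  set (ff := fun i => fjl q rho (jj i) (ll i) te).
  set (AA := fun i => ampl q rho phi (jj i) (ll i) te).
  set (re := fun i n => fst (uuC q rho phi k te (jj i) (ll i) n)).
  set (im := fun i n => snd (uuC q rho phi k te (jj i) (ll i) n)).
  assert (H1 : forall i n, sqrt (re i n ^ 2 + im i n ^ 2) = AA i).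
  { intros i n. unfold re, im, AA. rewrite <- (Cmod_uu q rho phi k te _ _ n HG (Hjj i) (Hll i)).
    reflexivity. }
  assert (Hsplit : forall N n,
    fst (full_sum q rho phi N (k n) te) = S4 ff (fun _ => 1) re N n /\
    snd (full_sum q rho phi N (k n) te) = S4 ff (fun _ => 1) im N n).
  { intros N n. unfold full_sum. rewrite !fst_Cplus, !snd_Cplus.
    destruct (summand_split q rho phi 1 1 N (k n) te) as [A1 B1].
    destruct (summand_split q rho phi 1 2 N (k n) te) as [A2 B2].
    destruct (summand_split q rho phi 2 1 N (k n) te) as [A3 B3].
    destruct (summand_split q rho phi 2 2 N (k n) te) as [A4 B4].
    rewrite A1, A2, A3, A4, B1, B2, B3, B4. unfold S4, ff, re, im, uuC. simpl. split; ring. }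
  assert (H2 : forall N, is_lim_seq (S4 ff (fun _ => 1) re N) 0).
  { intro N. destruct (lim_fst _ (Hlim te N)) as [L _].
    eapply is_lim_seq_ext; [|exact L]. intro n. apply Hsplit. }
  assert (H3 : forall N, is_lim_seq (S4 ff (fun _ => 1) im N) 0).
  { intro N. destruct (lim_fst _ (Hlim te N)) as [_ L].
    eapply is_lim_seq_ext; [|exact L]. intro n. apply Hsplit. }
  destruct (f_facts q rho te HG Hd) as (F1 & F2 & F3).
  destruct (abstract4 ff AA re im H1 H2 H3 F1 F2) as (S0 & S1 & S2 & S3 & P01 & P02 & P31 & P32).
  destruct (combi ff AA F1 F2 F3 S0 S1 S2 S3 P01 P02 P31 P32) as (C1 & C2 & C3).
  assert (Hcard : card_Lambda q rho phi te = cnt AA).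
  { unfold card_Lambda. rewrite len_filter4. simpl fst; simpl snd.
    rewrite !(propb_ampl q rho phi) by auto. reflexivity. }
  rewrite Hcard.
  split; [exact C1|split].
  - intros H4 j Hj. destruct (C2 H4) as (E1 & E2 & E3 & E4).
    destruct Hj as [-> | ->]; split; assumption.
  - intros H4 j1 l1 j2 l2 Hne L1 L2.
    assert (Hidx : forall j l, in_Lambda q rho phi j l te ->
       exists p, (p < 4)%nat /\ jj p = j /\ ll p = l /\ AA p <> 0).
    { intros j l (Hj & Hl' & Hz).
      assert (exists p, (p < 4)%nat /\ jj p = j /\ ll p = l) as (p & Hp & Ej & El).
      { destruct Hj as [-> | ->]; destruct Hl' as [-> | ->];
        [exists 0%nat | exists 1%nat | exists 2%nat | exists 3%nat]; simpl; repeat split; lia. }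
      exists p. split; [auto|split; [auto|split; [auto|]]].
      unfold AA. rewrite Ej, El. intro Z.
      apply (ampl_zero q rho phi j l te HG Hj Hl') in Z. auto. }
    destruct (Hidx j1 l1 L1) as (p & Hp & Ej1 & El1 & Ap).
    destruct (Hidx j2 l2 L2) as (r & Hr & Ej2 & El2 & Ar).
    assert (Hpr : p <> r) by (intro E; subst; apply Hne; reflexivity).
    destruct (C3 H4 p r Hp Hr Hpr Ap Ar) as (N1 & N2 & E1 & E2).
    unfold ff, AA in E1, E2. rewrite Ej1, El1, Ej2, El2 in E1, E2.
    split; [|split; [|split; auto]].
    + intros [[X Y]|[X Y]]; rewrite <- Ej1, <- El1 in X; rewrite <- Ej2, <- El2 in Y; apply N1;
      assert (Hp' : (p = 0 \/ p = 1 \/ p = 2 \/ p = 3)%nat) by lia;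
      assert (Hr' : (r = 0 \/ r = 1 \/ r = 2 \/ r = 3)%nat) by lia;
      destruct Hp' as [-> | [-> | [-> | ->]]]; destruct Hr' as [-> | [-> | [-> | ->]]];
      simpl in X, Y; try discriminate; auto.
    + intros [[X Y]|[X Y]]; rewrite <- Ej1, <- El1 in X; rewrite <- Ej2, <- El2 in Y; apply N2;
      assert (Hp' : (p = 0 \/ p = 1 \/ p = 2 \/ p = 3)%nat) by lia;
      assert (Hr' : (r = 0 \/ r = 1 \/ r = 2 \/ r = 3)%nat) by lia;
      destruct Hp' as [-> | [-> | [-> | ->]]]; destruct Hr' as [-> | [-> | [-> | ->]]];
      simpl in X, Y; try discriminate; auto.
Qed.
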